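(* Fix $n$ and let $\mathbf{A}\mathbf{x}=\mathbf{b}$ be the linear system described in the context, and let $\mathbf{x}^{RSD}$ be the vector representing random serial dictatorship (so $\mathbf{A}\mathbf{x}^{RSD}=\mathbf{b}$). Let $\mathbf{y}\neq\mathbf{x}^{RSD}$ be any solution of $\mathbf{A}\mathbf{x}=\mathbf{b}$. Then there exists $\lambda>0$ such that $\lambda\mathbf{y}+(1-\lambda)\mathbf{x}^{RSD}$ represents an assignment rule (i.e. all entries are nonnegative, so each $f(R)$ is bistochastic) which satisfies equal treatment of equals, support efficiency and localizedness, and which differs from RSD.
   Context: Let $N$ be a set of $n$ agents and $H$ a set of $n$ houses. A preference profile $R$ assigns to each agent a strict linear order $\succ_i$ over $H$; $\mathcal{R}$ is the set of all $n!^n$ profiles. An assignment rule $f$ maps each profile to a bistochastic $n\times n$ matrix; $f(R,i,h)$ is the probability that agent $i$ gets house $h$. Such a rule is identified with the vector $\mathbf{x}\in\mathbb{R}^{n^2n!^n}$ with $\mathbf{x}_{(R,i,h)}=f(R,i,h)$. For a priority order $\pi$ of the agents, serial dictatorship $SD_\pi$ lets agents in order $\pi$ successively take their most preferred remaining house, and $RSD(R)=\frac1{n!}\sum_\pi SD_\pi(R)$. Properties: support efficiency: $RSD(R,i,h)=0\Rightarrow f(R,i,h)=0$; localizedness: whenever $R'$ arises from $R$ by agent $i$ swapping two houses $h_k,h_l$ that are adjacent in $\succ_i$ (all other agents unchanged), $f(R,i,h)=f(R',i,h)$ for all $h\notin\{h_k,h_l\}$; equal treatment of equals: $\succ_i=\succ_j$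 implies $f(R,i,h)=f(R,j,h)$ for all $h$. The system $\mathbf{A}\mathbf{x}=\mathbf{b}$ (with unknown $\mathbf{x}\in\mathbb{R}^{n^2n!^n}$ indexed by triples $(R,i,h)$) consists exactly of the following equations: (1) $\sum_{h\in H}\mathbf{x}_{(R,i,h)}=1$ for every $R,i$, and $\sum_{i\in N}\mathbf{x}_{(R,i,h)}=1$ for every $R,h$; (2) $\mathbf{x}_{(R,i,h)}=0$ for every $(R,i,h)$ with $RSD(R,i,h)=0$; (3) $\mathbf{x}_{(R,i,h)}-\mathbf{x}_{(R',i,h)}=0$ for every $R$, $i$, every profile $R'$ obtained from $R$ by agent $i$ swapping two adjacent houses in her ranking, and every house $h$ not among the two swapped houses; (4) $\mathbf{x}_{(R,i,h)}-\mathbf{x}_{(R,j,h)}=0$ for every $R$, $h$ and agents $i\neq j$ with $\succ_i=\succ_j$. *)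

(* Defs.v *)
From HB Require Import structures.
From mathcomp Require Import all_boot all_order all_algebra all_fingroup.
Set Implicit Arguments. Unset Strict Implicit. Unset Printing Implicit Defensive.
Import Order.TTheory GRing.Theory Num.Theory.
Local Open Scope ring_scope.

(* Agents and houses are both 'I_n.  A strict preference of an agent is a
   ranking sigma : {perm 'I_n}; sigma k is the house ranked at position k
   (position 0 = most preferred). *)
Definition profile (n : nat) := {ffun 'I_n -> {perm 'I_n}}.

(* An assignment-rule vector: x R i h = probability agent i gets house h. *)
Definition rvec (F : Type) (n : nat) := profile n -> 'I_n -> 'I_n -> F.

(* Most preferred house of ranking sigma not in [taken] (d = unused default). *)
Definition pick_best n (sigma : {perm 'I_n}) (taken : {set 'I_n}) (d : 'I_n) : 'I_n :=
  head d [seq h <- [seq sigma k | k <- enum 'I_n] | h \notin taken].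

Fixpoint sd_run n (R : profile n) (ag : seq 'I_n) (taken : {set 'I_n})
  (acc : {ffun 'I_n -> 'I_n}) : {ffun 'I_n -> 'I_n} :=
  match ag with
  | [::] => acc
  | i :: ag' =>
      let h := pick_best (R i) taken i in
      sd_run R ag' (h |: taken) [ffun j => if j == i then h else acc j]
  end.

(* Serial dictatorship with priority pi (pi k = agent at priority position k):
   SD pi R i = house obtained by agent i. *)
Definition SD n (pi : {perm 'I_n}) (R : profile n) : {ffun 'I_n -> 'I_n} :=
  sd_run R [seq pi k | k <- enum 'I_n] set0 [ffun j => j].

Definition RSD (F : numFieldType) n : rvec F n :=
  fun R i h => (n`!%:R)^-1 * \sum_(pi : {perm 'I_n}) ((SD pi R i == h)%:R : F).

Definition swap_prof n (R : profile n) (i p q : 'I_n) : profile n :=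
  [ffun j => if j == i then (tperm p q * R i)%g else R j].

Definition bistoch (F : numFieldType) n (x : rvec F n) : Prop :=
  (forall (R : profile n) (i : 'I_n), \sum_(h < n) x R i h = 1) /\ (forall (R : profile n) (h : 'I_n), \sum_(i < n) x R i h = 1).

(* The system A x = b, equations (1)-(4). *)
Definition solves_system (F : numFieldType) n (x : rvec F n) : Prop :=
  [/\ bistoch x,
      (forall (R : profile n) (i h : 'I_n), @RSD F n R i h = 0 -> x R i h = 0),
      (forall (R : profile n) (i p q : 'I_n), val q = (val p).+1 ->
         forall h, h != R i p -> h != R i q -> x R i h = x (swap_prof R i p q) i h)
    & (forall (R : profile n) (i j h : 'I_n), i != j -> R i = R j -> x R i h = x R j h)].

Definition is_rule (F : numFieldType) n (x : rvec F n) : Prop :=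
  (forall (R : profile n) (i h : 'I_n), 0 <= x R i h) /\ bistoch x.

Definition support_efficient (F : numFieldType) n (x : rvec F n) : Prop :=
  forall (R : profile n) (i h : 'I_n), @RSD F n R i h = 0 -> x R i h = 0.

Definition localized (F : numFieldType) n (x : rvec F n) : Prop :=
  forall (R : profile n) (i p q : 'I_n), val q = (val p).+1 ->
    forall h, h != R i p -> h != R i q -> x R i h = x (swap_prof R i p q) i h.

Definition equal_treatment (F : numFieldType) n (x : rvec F n) : Prop :=
  forall (R : profile n) (i j h : 'I_n), R i = R j -> x R i h = x R j h.

(* Main.v *)
Require Import Defs.
From HB Require Import structures.
From mathcomp Require Import all_boot all_order all_algebra all_fingroup.
From mathcomp Require Import zify lra.
From Stdlib Require Import FunctionalExtensionality.
Import Order.TTheory GRing.Theory Num.Theory.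
Set Implicit Arguments. Unset Strict Implicit. Unset Printing Implicit Defensive.
Local Open Scope ring_scope.

Section Pick.
Variable n : nat.

Lemma head_filter_nth (T : eqType) (P : pred T) (s : seq T) d :
  head d (filter P s) = nth d s (find P s).
Proof. by elim: s => //= x s IH; case: (P x). Qed.

Lemma exists_notin (T : {set 'I_n}) : (#|T| < n)%N -> exists h, h \notin T.
Proof.
move=> hT.
have : (0 < #|~: T|)%N by have := cardsC T; rewrite card_ord; lia.
by case/card_gt0P => h; rewrite in_setC => hh; exists h.
Qed.

Lemma notin_card (T : {set 'I_n}) h : h \notin T -> (#|T| < n)%N.
Proof.
move=> hh.
have : (0 < #|~: T|)%N by apply/card_gt0P; exists h; rewrite in_setC.
by have := cardsC T; rewrite card_ord; lia.
Qed.

Lemma pick_spec (sigma : {perm 'I_n}) (T : {set 'I_n}) d :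
  (#|T| < n)%N -> exists k : 'I_n, [/\ pick_best sigma T d = sigma k, sigma k \notin T &
     forall k' : 'I_n, (k' < k)%N -> sigma k' \in T].
Proof.
move=> hT; have [h hh] := exists_notin hT.
rewrite /pick_best.
set s := [seq sigma k | k <- enum 'I_n].
set P := (fun h0 : 'I_n => h0 \notin T).
have hs : has P s.
  apply/hasP; exists h => //.
  by rewrite -[h](permKV sigma); apply: map_f; rewrite mem_enum.
have := hs; rewrite has_find /s size_map size_enum_ord => hk.
have nthE : forall k : 'I_n, nth d s k = sigma k.
  by move=> k; rewrite /s (nth_map k) ?size_enum_ord // nth_ord_enum.
exists (Ordinal hk); split.
- by rewrite head_filter_nth -nthE.
- by rewrite -nthE; exact: (nth_find d hs).
- move=> k' hk'; have := before_find d hk'.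
  by rewrite nthE /P => /negbFE.
Qed.

Lemma pick_eq (sigma : {perm 'I_n}) (T : {set 'I_n}) (d : 'I_n) (k : 'I_n) : sigma k \notin T ->
  (forall k' : 'I_n, (k' < k)%N -> sigma k' \in T) -> pick_best sigma T d = sigma k.
Proof.
move=> hk hb.
have [k1 [-> hk1 hb1]] := pick_spec sigma d (notin_card hk).
case: (ltngtP k k1) => c.
- by have := hb1 _ c; rewrite (negbTE hk).
- by have := hb _ c; rewrite (negbTE hk1).
- by rewrite (val_inj c).
Qed.

Lemma pick_def (sigma : {perm 'I_n}) (T : {set 'I_n}) d d' : (#|T| < n)%N ->
  pick_best sigma T d = pick_best sigma T d'.
Proof.
move=> hT; have [k [-> hk hb]] := pick_spec sigma d hT.
by rewrite (pick_eq d' hk hb).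
Qed.

Lemma pick_swap1 (sigma : {perm 'I_n}) (T : {set 'I_n}) d d' (p q : 'I_n) h :
  val q = (val p).+1 -> (#|T| < n)%N -> h != sigma p -> h != sigma q ->
  pick_best sigma T d = h -> pick_best (tperm p q * sigma)%g T d' = h.
Proof.
move=> hpq hT hp hq hkh.
have [k [hk0 hk hb]] := pick_spec sigma d hT; rewrite hk0 in hkh.
have kp : k != p by apply: contra hp => /eqP e; rewrite -hkh e.
have kq : k != q by apply: contra hq => /eqP e; rewrite -hkh e.
rewrite -hkh.
have -> : sigma k = (tperm p q * sigma)%g k by rewrite permM tpermD // eq_sym.
apply: pick_eq.
  by rewrite permM tpermD 1?eq_sym.
move=> k' hk'; rewrite permM; apply: hb.
have kq' : val k != val q by [].
move: kq' hk' hpq.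
case: tpermP => [->|->|_ _] /=; try lia; by [].
Qed.

Lemma pick_swap (sigma : {perm 'I_n}) (T : {set 'I_n}) d d' (p q : 'I_n) h :
  val q = (val p).+1 -> (#|T| < n)%N -> h != sigma p -> h != sigma q ->
  (pick_best sigma T d == h) = (pick_best (tperm p q * sigma)%g T d' == h).
Proof.
move=> hpq hT hp hq; apply/eqP/eqP.
  exact: pick_swap1.
move=> H; have := @pick_swap1 (tperm p q * sigma)%g T d' d p q h hpq hT.
rewrite mulgA tperm2 mul1g !permM tpermL tpermR; apply => //.
Qed.
End Pick.
Section Run.
Variable n : nat.
Implicit Types (R : profile n) (ag : seq 'I_n) (T : {set 'I_n}) (acc : {ffun 'I_n -> 'I_n}).

Lemma sd_run_cons R a ag T acc : sd_run R (a :: ag) T acc =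
  sd_run R ag (pick_best (R a) T a |: T)
    [ffun j => if j == a then pick_best (R a) T a else acc j].
Proof. by []. Qed.

Lemma sd_run_notin R ag T acc x : x \notin ag -> sd_run R ag T acc x = acc x.
Proof.
elim: ag T acc => //= a ag IH T acc.
rewrite in_cons negb_or => /andP [xa xag].
by rewrite IH // ffunE (negbTE xa).
Qed.

Lemma sd_run_inj R ag T acc : uniq ag -> (#|T| + size ag <= n)%N ->
  (forall x y, x \notin ag -> y \notin ag -> acc x = acc y -> x = y) ->
  (forall j, j \notin ag -> acc j \in T) ->
  injective (sd_run R ag T acc).
Proof.
elim: ag T acc => [|a ag IH] T acc /=.
  by move=> _ _ hi _ x y; apply: hi.
move=> /andP [aag uag] hc hi hm.
have hT : (#|T| < n)%N by move: hc; set z := #|T|; lia.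
have [k [hk0 hk hb]] := pick_spec (R a) a hT.
set h := pick_best (R a) T a.
have hnT : h \notin T by rewrite /h hk0.
apply: IH => //.
- by rewrite cardsU1 hnT; move: hc; set z := #|T|; lia.
- move=> x y xn yn; rewrite !ffunE.
  case: (eqVneq x a) => [->|xa]; case: (eqVneq y a) => [->|ya] //.
  + move=> e; have : acc y \in T by apply: hm; rewrite in_cons negb_or ya.
    by rewrite -e (negbTE hnT).
  + move=> e; have : acc x \in T by apply: hm; rewrite in_cons negb_or xa.
    by rewrite e (negbTE hnT).
  + by apply: hi; rewrite in_cons negb_or ?xa ?ya.
- move=> j jn; rewrite ffunE; case: (eqVneq j a) => [_|ja].
    by rewrite setU11.
  by rewrite setU1r //; apply: hm; rewrite in_cons negb_or ja.
Qed.

Lemma SD_inj (pi : {perm 'I_n}) R : injective (SD pi R).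
Proof.
have hin : forall j, j \in [seq pi k | k <- enum 'I_n].
  by move=> j; rewrite -[j](permKV pi); apply: map_f; rewrite mem_enum.
apply: sd_run_inj.
- by rewrite map_inj_uniq ?enum_uniq //; exact: perm_inj.
- by rewrite cards0 size_map size_enum_ord.
- by move=> x y; rewrite hin.
- by move=> j; rewrite hin.
Qed.

Lemma sd_run_tperm R (i j : 'I_n) ag T acc acc' : R i = R j -> (#|T| + size ag <= n)%N ->
  (forall x, tperm i j x \notin ag -> acc' x = acc (tperm i j x)) ->
  forall x, sd_run R (map (tperm i j) ag) T acc' x = sd_run R ag T acc (tperm i j x).
Proof.
move=> hR; elim: ag T acc acc' => [|a ag IH] T acc acc' /=.
  by move=> _ h x; apply: h.
move=> hc hacc x.
have hT : (#|T| < n)%N by move: hc; set z := #|T|; lia.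
have eR : R (tperm i j a) = R a by case: tpermP => [->|->|].
rewrite eR (pick_def _ (tperm i j a) a hT).
apply: IH.
  by rewrite cardsU1; move: hc; set z := #|T|; case: (_ \notin _) => /=; lia.
move=> y hy; rewrite !ffunE.
case: (eqVneq y (tperm i j a)) => [->|ya].
  by rewrite tpermK eqxx.
have ya' : tperm i j y != a.
  by apply: contra ya => /eqP <-; rewrite tpermK.
by rewrite (negbTE ya'); apply: hacc; rewrite in_cons negb_or ya'.
Qed.

Lemma SD_tperm (pi : {perm 'I_n}) R (i j : 'I_n) : R i = R j ->
  SD (pi * tperm i j)%g R i = SD pi R j.
Proof.
move=> hR; rewrite /SD.
have -> : [seq (pi * tperm i j)%g k | k <- enum 'I_n] =
          map (tperm i j) [seq pi k | k <- enum 'I_n].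
  by elim: (enum 'I_n) => //= k s ->; rewrite permM.
have hin : forall x, x \in [seq pi k | k <- enum 'I_n].
  by move=> x; rewrite -[x](permKV pi); apply: map_f; rewrite mem_enum.
rewrite (@sd_run_tperm R i j _ _ [ffun x => x]) //.
- by rewrite tpermL.
- by rewrite cards0 size_map size_enum_ord.
- by move=> x; rewrite hin.
Qed.

Lemma sd_run_local R R' (i : 'I_n) ag T acc :
  (forall j, j != i -> R j = R' j) -> uniq ag -> i \in ag -> (#|T| + size ag <= n)%N ->
  exists T' : {set 'I_n}, [/\ (#|T'| < n)%N,
    sd_run R ag T acc i = pick_best (R i) T' i &
    sd_run R' ag T acc i = pick_best (R' i) T' i].
Proof.
move=> hR; elim: ag T acc => [|a ag IH] T acc //=.
move=> /andP [aag uag]; rewrite in_cons => /orP [/eqP ia|iag] hc.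
  subst a; exists T; split; first by move: hc; set z := #|T|; lia.
  - by rewrite sd_run_notin // ffunE eqxx.
  - by rewrite sd_run_notin // ffunE eqxx.
have ai : a != i by apply: contra aag => /eqP ->.
rewrite -(hR a ai).
apply: IH => //.
by rewrite cardsU1; move: hc; set z := #|T|; case: (_ \notin _) => /=; lia.
Qed.

End Run.
Section RSDprops.
Variables (F : realFieldType) (n : nat).
Local Notation r := (@RSD F n).

Lemma fact_neq0 : (n`!%:R : F) != 0.
Proof. by rewrite pnatr_eq0 -lt0n fact_gt0. Qed.

Lemma RSD_ge0 (R : profile n) (i h : 'I_n) : 0 <= r R i h.
Proof.
rewrite /RSD mulr_ge0 ?invr_ge0 ?ler0n //.
by apply: sumr_ge0 => pi _; rewrite ler0n.
Qed.

Lemma RSD_pos (R : profile n) (i h : 'I_n) : r R i h != 0 -> (n`!%:R : F)^-1 <= r R i h.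
Proof.
rewrite /RSD -natr_sum.
case: (\sum_(pi : {perm 'I_n}) _)%N => [|m]; first by rewrite mulr0 eqxx.
move=> _; rewrite -{1}[(_^-1)]mulr1 ler_wpM2l ?invr_ge0 ?ler0n //.
by rewrite ler1n.
Qed.

Lemma sum_eq1 (T : finType) (a : T) : \sum_(h : T) ((a == h)%:R : F) = 1.
Proof.
rewrite (bigD1 a) //= eqxx big1 ?addr0 // => h ha.
by rewrite eq_sym (negbTE ha).
Qed.

Lemma sum_inj1 (f : 'I_n -> 'I_n) (finj : injective f) h :
  \sum_i ((f i == h)%:R : F) = 1.
Proof.
have [g fK gK] := injF_bij finj.
rewrite (eq_bigr (fun i => ((g h == i)%:R : F))) ?sum_eq1 // => i _.
have -> : (f i == h) = (g h == i); last by [].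
by apply/eqP/eqP => [<-|<-]; [rewrite fK | rewrite gK].
Qed.

Lemma RSD_bistoch : bistoch r.
Proof.
split.
- move=> R i; rewrite /RSD -mulr_sumr exchange_big /=.
  under eq_bigr do rewrite sum_eq1.
  by rewrite sumr_const card_Sn mulVf // fact_neq0.
- move=> R h; rewrite /RSD -mulr_sumr exchange_big /=.
  under eq_bigr => pi _ do rewrite (sum_inj1 (@SD_inj n pi R)).
  by rewrite sumr_const card_Sn mulVf // fact_neq0.
Qed.

Lemma RSD_eqt (R : profile n) (i j h : 'I_n) : R i = R j -> r R i h = r R j h.
Proof.
move=> hR; rewrite /RSD; congr (_ * _).
rewrite (reindex_inj (mulIg (tperm i j))) /=.
by apply: eq_bigr => pi _; rewrite SD_tperm.
Qed.

Lemma RSD_local : localized r.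
Proof.
move=> R i p q hpq h hp hq; rewrite /RSD; congr (_ * _).
apply: eq_bigr => pi _.
have hin : i \in [seq pi k | k <- enum 'I_n].
  by rewrite -[i](permKV pi); apply: map_f; rewrite mem_enum.
have hR : forall j, j != i -> R j = swap_prof R i p q j.
  by move=> j ji; rewrite /swap_prof ffunE (negbTE ji).
have hu : uniq [seq pi k | k <- enum 'I_n].
  by rewrite map_inj_uniq ?enum_uniq //; exact: perm_inj.
have hc : (#|(set0 : {set 'I_n})| + size [seq pi k | k <- enum 'I_n] <= n)%N.
  by rewrite cards0 size_map size_enum_ord.
have [T' [hT e1 e2]] := sd_run_local [ffun j => j] hR hu hin hc.
rewrite /SD e1 e2 /swap_prof ffunE eqxx.
by rewrite (pick_swap i i hpq hT hp hq).
Qed.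

End RSDprops.
Lemma le_sum1 (F : realFieldType) (T : finType) (f : T -> F) x :
  (forall y, 0 <= f y) -> f x <= \sum_y f y.
Proof.
move=> h0; rewrite (bigD1 x) //= lerDl.
by apply: sumr_ge0 => y _.
Qed.

Theorem mainTheorem3 (F : realFieldType) (n : nat) (y : rvec F n) :
  solves_system y -> y <> @RSD F n ->
  exists2 lam : F, 0 < lam &
    let z : rvec F n := fun R i h => lam * y R i h + (1 - lam) * @RSD F n R i h in
    [/\ is_rule z, equal_treatment z, support_efficient z, localized z
      & z <> @RSD F n].
Proof.
move=> [[yr yc] ys yl ye] yne.
set r := @RSD F n.
set S := \sum_(R : profile n) \sum_(i : 'I_n) \sum_(h : 'I_n) `|y R i h - r R i h|.
have S0 : 0 <= S by do 3 (apply: sumr_ge0 => ? _); exact: normr_ge0.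
set c := (n`!%:R : F)^-1.
have c0 : 0 < c by rewrite /c invr_gt0 ltr0n fact_gt0.
have S1 : 0 < 1 + S by lra.
set lam := c / (1 + S).
have lam0 : 0 < lam by rewrite /lam divr_gt0.
have lamS : lam * S <= c.
  rewrite /lam mulrAC ler_pdivrMr // ler_pM2l //; lra.
have hS : forall R i h, `|y R i h - r R i h| <= S.
  move=> R i h.
  apply: le_trans (@le_sum1 F _ (fun R => \sum_(i : 'I_n) \sum_(h : 'I_n) `|y R i h - r R i h|) R _); last first.
    by move=> R'; do 2 (apply: sumr_ge0 => ? _); exact: normr_ge0.
  apply: le_trans (@le_sum1 F _ (fun i => \sum_(h : 'I_n) `|y R i h - r R i h|) i _); last first.
    by move=> i'; apply: sumr_ge0 => ? _; exact: normr_ge0.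
  by apply: (@le_sum1 F _ (fun h => `|y R i h - r R i h|)) => ?; exact: normr_ge0.
exists lam => //=.
split.
- split.
  + move=> R i h.
    have [rz|rnz] := eqVneq (r R i h) 0.
      by rewrite rz (ys _ _ _ rz) !mulr0 addr0.
    have rc : c <= r R i h := RSD_pos rnz.
    have hh := hS R i h.
    have hn : - (y R i h - r R i h) <= S by apply: le_trans hh; rewrite -normrN ler_norm.
    have hp : 0 <= y R i h - r R i h + S by lra.
    have := mulr_ge0 (ltW lam0) hp.
    lra.
  + split.
    * move=> R i; have e1 := (RSD_bistoch F n).1 R i.
      change (\sum_h r R i h = 1) in e1.
      rewrite big_split /= -mulr_sumr yr -mulr_sumr e1; lra.
    * move=> R h; have e1 := (RSD_bistoch F n).2 R h.
      change (\sum_i r R i h = 1) in e1.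
      rewrite big_split /= -mulr_sumr yc -mulr_sumr e1; lra.
- move=> R i j h e.
  have [ij|ij] := eqVneq i j; first by rewrite ij.
  rewrite (ye _ _ _ _ ij e); congr (_ + _ * _); exact: RSD_eqt.
- move=> R i h rz; have rz' : r R i h = 0 := rz.
  by rewrite rz' (ys _ _ _ rz) !mulr0 addr0.
- move=> R i p q hpq h hp hq.
  rewrite (yl _ _ _ _ hpq _ hp hq); congr (_ + _ * _); exact: RSD_local.
- move=> ez; apply: yne.
  apply: functional_extensionality => R; apply: functional_extensionality => i.
  apply: functional_extensionality => h.
  have e : lam * y R i h + (1 - lam) * r R i h = r R i h := congr1 (fun f => f R i h) ez.
  have : lam * (y R i h - r R i h) = 0 by lra.
  by move/eqP; rewrite mulf_eq0 (negbTE (lt0r_neq0 lam0)) subr_eq0 => /eqP.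
Qed.
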